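(* Consider the algorithm described in the context for solving the problem there, and let the problem assumption and the random-sample assumption hold. Define the auxiliary stochastic sequence $\{u_k\}$ by $u_0:=x_0$ and $$u_{k+1}\triangleq \mathcal{P}_X\left(u_k+N^{-1}\gamma_k({w}_{f,k}+e_{f,k}+\rho_k{w}_{F,k}+\rho_k{e}_{F,k})\right).$$ Then for any $y \in X$ and $k \geq 0$, \begin{align*} & (\gamma_k\rho_k)^rF(y)^T(y_{k+1}-y) + (\gamma_k\rho_k)^{r}\rho_k^{-1}(f(y_{k+1})-f(y)) \\ & \leq 0.5N(\gamma_k\rho_k)^{r-1}\left(\|x_k-y\|^2 -\|x_{k+1}-y\|^2+\|u_k-y\|^2-\|u_{k+1}-y\|^2\right) \\ &+2N^{-1}(\gamma_k\rho_k)^{r+1}\rho_k^{-2}\left(6C_f^2+3\|\tilde{w}_{f,k}\|^2+3\|\tilde{e}_{f,k}\|^2+4\|{w}_{f,k}\|^2+4\|e_{f,k}\|^2\right) \\ &+2N^{-1}(\gamma_k\rho_k)^{r+1}\left(6C_F^2+3\|\tilde{w}_{F,k}\|^2+3\|\tilde{e}_{F,k}\|^2+4\|{w}_{F,k}\|^2+4\|{e}_{F,k}\|^2\right) \\ &+\gamma_k^r\rho_k^{r-1}\left({w}_{f,k}+e_{f,k}+\rho_k{w}_{F,k}+\rho_k{e}_{F,k}\right)^T(u_k-y_{k+1}). \end{align*}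
   Context: Setting: $N\ge1$, positive integers $n_1,\dots,n_N$ with $n=\sum_i n_i$, sets $X_i\subseteq\mathbb R^{n_i}$, $X=\prod_{i=1}^N X_i$; $\mathcal P_X,\mathcal P_{X_i}$ are Euclidean projections. $\xi$ is a random vector on $(\Omega,\mathcal F,\mathbb P)$ with values in $\mathbb R^d$. $f:\mathbb R^n\times\mathbb R^d\to\mathbb R$, $F=(F_1,\dots,F_N):\mathbb R^n\times\mathbb R^d\to\mathbb R^n$ with $F_i$ valued in $\mathbb R^{n_i}$; $f(x):=\mathbb E[f(x,\xi)]$, $F(x):=\mathbb E[F(x,\xi)]$. Problem: minimize $f(x)$ subject to $x\in\mathrm{SOL}(X,F):=\{x\in X:(z-x)^TF(x)\ge0\ \forall z\in X\}$. $\tilde\nabla f(x)$ denotes a subgradient of $f$ at $x$ and $\tilde\nabla f(x,\xi)$ a stochastic subgradient; subscript $i$ denotes the $i$-th block. $\mathbf U_\ell\in\mathbb R^{n\times n_\ell}$ with $[\mathbf U_1,\dots,\mathbf U_N]=\mathbf I_n$. Problem assumption: (i) $F(\cdot)$ is single-valued, continuous and monotone on its domain; (ii) $f(\cdot)$ is real-valued and convex on its domain; (iii) $X\subseteq\mathrm{int}(\mathrm{dom}(F)\cap\mathrm{dom}(f))$ is nonempty, compact and convex (each $X_i$ closed convex). $C_F,C_f>0$ are constants with $\|F(x)\|\le C_F$ and $\|\tilde\nabla f(x)\|\le C_f$ for all $\tilde\nabla f(x)\in\partial f(x)$, $x\in X$. Algorithm: given $x_0,y_0\in X$, positive sequences $\{\gamma_k\},\{\rho_k\}$,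 a scalar $r<1$; for $k=0,1,\dots$: draw $i_k,\tilde i_k$ uniformly from $\{1,\dots,N\}$ and realizations $\xi_k,\tilde\xi_k$ of $\xi$; $y_{k+1}^{(i)}=\mathcal P_{X_i}\big(x_k^{(i)}-\gamma_k(\tilde\nabla_i f(x_k,\tilde\xi_k)+\rho_kF_i(x_k,\tilde\xi_k))\big)$ if $i=\tilde i_k$, else $y_{k+1}^{(i)}=x_k^{(i)}$; $x_{k+1}^{(i)}=\mathcal P_{X_i}\big(x_k^{(i)}-\gamma_k(\tilde\nabla_i f(y_{k+1},\xi_k)+\rho_kF_i(y_{k+1},\xi_k))\big)$ if $i=i_k$, else $x_{k+1}^{(i)}=x_k^{(i)}$. Errors: $\tilde w_{F,k}=F(x_k,\tilde\xi_k)-F(x_k)$, $\tilde w_{f,k}=\tilde\nabla f(x_k,\tilde\xi_k)-\tilde\nabla f(x_k)$, $w_{F,k}=F(y_{k+1},\xi_k)-F(y_{k+1})$, $w_{f,k}=\tilde\nabla f(y_{k+1},\xi_k)-\tilde\nabla f(y_{k+1})$, $\tilde e_{F,k}=N\mathbf U_{\tilde i_k}F_{\tilde i_k}(x_k,\tilde\xi_k)-F(x_k,\tilde\xi_k)$, $\tilde e_{f,k}=N\mathbf U_{\tilde i_k}\tilde\nabla_{\tilde i_k}f(x_k,\tilde\xi_k)-\tilde\nabla f(x_k,\tilde\xi_k)$, $e_{F,k}=N\mathbf U_{i_k}F_{i_k}(y_{k+1},\xi_k)-F(y_{k+1},\xi_k)$, $e_{f,k}=N\mathbf U_{i_k}\tilde\nabla_{i_k}f(y_{k+1},\xi_k)-\tilde\nabla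 f(y_{k+1},\xi_k)$. Random-sample assumption: (a) the $\tilde\xi_k,\xi_k$ are i.i.d. copies of $\xi$, the $\tilde i_k,i_k$ i.i.d. uniform on $\{1,\dots,N\}$, all mutually independent; (b) $F(\cdot,\tilde\xi_k)$, $F(\cdot,\xi_k)$ are unbiased for $F(\cdot)$ and $\tilde\nabla f(\cdot,\tilde\xi_k)$, $\tilde\nabla f(\cdot,\xi_k)$ unbiased for $\tilde\nabla f(\cdot)$; (c) there exist $\nu_F,\nu_f>0$ with $\mathbb E[\|F(x,\xi)-F(x)\|^2\mid x]\le\nu_F^2$ and $\mathbb E[\|\tilde\nabla f(x,\xi)-\tilde\nabla f(x)\|^2\mid x]\le\nu_f^2$. *)

(* Defs.v *)
From mathcomp Require Import all_boot all_order all_algebra.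
From mathcomp Require Import boolp classical_sets functions reals exp.
Set Implicit Arguments. Unset Strict Implicit. Unset Printing Implicit Defensive.
Import Order.TTheory GRing.Theory Num.Theory.
Local Open Scope ring_scope.
Local Open Scope classical_set_scope.

Section Euclid.
Variables (R : realType) (I : finType).
Definition dotp (x y : I -> R) : R := \sum_(t : I) x t * y t.
Definition nsq (x : I -> R) : R := dotp x x.
Definition nrm (x : I -> R) : R := Num.sqrt (nsq x).

Definition is_proj (C : set (I -> R)) (x p : I -> R) : Prop :=
  C p /\ forall z, C z -> nrm (x - p) <= nrm (x - z).

Definition cvxc (t : R) (x y : I -> R) : I -> R := fun s => t * x s + (1 - t) * y s.
Definition scl (a : R) (x : I -> R) : I -> R := fun s => a * x s.
Definition convex_set (C : set (I -> R)) : Prop :=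
  forall x y (t : R), C x -> C y -> 0 <= t <= 1 -> C (cvxc t x y).
Definition closed_set (C : set (I -> R)) : Prop :=
  forall x, (forall e : R, 0 < e -> exists z, C z /\ nrm (z - x) < e) -> C x.
Definition bounded_set (C : set (I -> R)) : Prop :=
  exists M : R, forall x, C x -> nrm x <= M.
(* compactness in the finite-dimensional space R^I (Heine-Borel) *)
Definition compact_set (C : set (I -> R)) : Prop := closed_set C /\ bounded_set C.
Definition interior_of (D : set (I -> R)) : set (I -> R) :=
  fun x => exists r : R, 0 < r /\ forall z, nrm (z - x) < r -> D z.

Definition continuous_on (D : set (I -> R)) (F : (I -> R) -> (I -> R)) : Prop :=
  forall x, D x -> forall e : R, 0 < e -> exists d : R, 0 < d /\
    forall z, D z -> nrm (z - x) < d -> nrm (F z - F x) < e.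
Definition monotone_on (D : set (I -> R)) (F : (I -> R) -> (I -> R)) : Prop :=
  forall x y, D x -> D y -> 0 <= dotp (F x - F y) (x - y).
Definition convex_on (D : set (I -> R)) (f : (I -> R) -> R) : Prop :=
  forall x y (t : R), D x -> D y -> 0 <= t <= 1 ->
    D (cvxc t x y) /\
    f (cvxc t x y) <= t * f x + (1 - t) * f y.
Definition subgrad (D : set (I -> R)) (f : (I -> R) -> R) (x g : I -> R) : Prop :=
  forall z, D z -> f x + dotp g (z - x) <= f z.
End Euclid.

(* Block structure: N blocks of sizes ns i; R^n with n = sum_i ns i is
   represented as functions on the finite type of pairs (i, j), j < ns i. *)
Definition bidx (N : nat) (ns : 'I_N -> nat) : finType :=
  {i : 'I_N & 'I_(ns i)}.

Section Blocks.
Variables (R : realType) (N : nat) (ns : 'I_N -> nat).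
Local Notation V := (bidx ns -> R).
Definition blk (i : 'I_N) (x : V) : 'I_(ns i) -> R :=
  fun j => x (Tagged (fun i => 'I_(ns i)) j).
(* U_i x^(i) : keep block i of x, zero elsewhere *)
Definition blkmask (i : 'I_N) (x : V) : V :=
  fun t => if tag t == i then x t else 0.


Definition prodset (Xb : forall i : 'I_N, set ('I_(ns i) -> R)) : set V :=
  fun x => forall i, Xb i (@blk i x).
End Blocks.
Arguments blk {R N ns} i x _.
Arguments blkmask {R N ns} i x _.

(* Main.v *)
Require Import Defs.
From mathcomp Require Import all_boot all_order all_algebra.
From mathcomp Require Import boolp classical_sets functions reals exp.
From mathcomp Require Import ring lra.
Import Order.TTheory GRing.Theory Num.Theory.
Local Open Scope ring_scope.
Local Open Scope classical_set_scope.

Section E.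
Variables (R : realType) (I : finType).
Implicit Types (a b p z : I -> R).

Lemma fsubE a b (s : I) : (a - b) s = a s - b s. Proof. by []. Qed.
Lemma faddE a b (s : I) : (a + b) s = a s + b s. Proof. by []. Qed.
Lemma foppE a (s : I) : (- a) s = - a s. Proof. by []. Qed.

Lemma nsq_ge0 a : 0 <= nsq a.
Proof. by apply: sumr_ge0 => t _; rewrite -expr2 sqr_ge0. Qed.

Lemma nrm_nsq a b : nrm a <= nrm b -> nsq a <= nsq b.
Proof. by rewrite /nrm ler_sqrt // nsq_ge0. Qed.

Lemma nsq_le_sq a c : 0 <= c -> nrm a <= c -> nsq a <= c ^+ 2.
Proof.
move=> c0 h; rewrite -(sqr_sqrtr (nsq_ge0 a)).
by rewrite -/(nrm a) lerXn2r // ?nnegrE ?sqrtr_ge0.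
Qed.

Lemma proj_VI (C : set (I -> R)) a p z :
  convex_set C -> is_proj C a p -> C z -> dotp (a - p) (z - p) <= 0.
Proof.
move=> cv [Cp hmin] Cz.
set m := dotp (a - p) (z - p).
set M := nsq (z - p).
have M0 : 0 <= M by apply: nsq_ge0.
rewrite leNgt; apply/negP => m0.
pose t := m / (m + M).
have t0 : 0 < t by rewrite divr_gt0 //; lra.
have t1 : t <= 1 by rewrite ler_pdivrMr; lra.
have := hmin _ (cv z p t Cz Cp (andb_true_intro (conj (ltW t0) t1))).
move/nrm_nsq.
have -> : nsq (a - cvxc t z p) = nsq (a - p) - 2 * t * m + t ^+ 2 * M.
  rewrite /nsq /m /M /dotp /cvxc mulr_sumr mulr_sumr -sumrN -!big_split /=.
  by apply: eq_bigr => s _; rewrite !fsubE /=; ring.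
move=> h.
have : t * (t * M - 2 * m) >= 0 by nra.
have tm : t * (m + M) = m by rewrite /t mulrVK // unitfE; lra.
rewrite pmulr_rge0 // subr_ge0; nra.
Qed.
End E.
Arguments proj_VI [R I C a p z].
Arguments nsq_le_sq [R I a c].
Arguments nsq_ge0 {R I}.

Section B.
Variables (R : realType) (N : nat) (ns : 'I_N -> nat)
  (Xb : forall i : 'I_N, set ('I_(ns i) -> R)).
Local Notation V := (bidx ns -> R).

Lemma dotp_blk (a b : V) : dotp a b = \sum_i dotp (blk i a) (blk i b).
Proof.
rewrite /dotp /blk (sig_big_dep (fun _ => true) (fun _ _ => true)
  (fun i j => a (Tagged (fun i => 'I_(ns i)) j) * b (Tagged (fun i => 'I_(ns i)) j))).
by apply: eq_big => // -[i j].
Qed.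

Lemma prod_step (xk xn : V) (G : V) (gm : R) (i0 : 'I_N) :
  prodset Xb xk ->
  (forall i, if i == i0 then is_proj (Xb i) (blk i (xk - scl gm G)) (blk i xn)
             else blk i xn = blk i xk) ->
  prodset Xb xn.
Proof.
move=> Hk H i; have := H i; case: (i == i0) => h; first exact: (proj1 h).
by rewrite h; apply: Hk.
Qed.

Lemma blk_VI (xk xn z Gs Dv : V) (gm c : R) (i0 : 'I_N) :
  (forall i, convex_set (Xb i)) ->
  (forall i, if i == i0 then is_proj (Xb i) (blk i (xk - scl gm Gs)) (blk i xn)
             else blk i xn = blk i xk) ->
  (forall t, c * Dv t = if tag t == i0 then gm * Gs t else 0) ->
  prodset Xb z -> dotp (xk - scl c Dv - xn) (z - xn) <= 0.
Proof.
move=> cvx H HD Hz; rewrite dotp_blk; apply: sumr_le0 => i _.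
have := H i; case: eqP => [-> | ne] h.
  have := proj_VI (cvx i0) h (Hz i0).
  suff -> : dotp (blk i0 (xk - scl c Dv - xn)) (blk i0 (z - xn)) =
    dotp (blk i0 (xk - scl gm Gs) - blk i0 xn) (blk i0 z - blk i0 xn) by [].
  rewrite /dotp; apply: eq_bigr => j _; rewrite /blk /scl !fsubE.
  by have := HD (Tagged (fun i => 'I_(ns i)) j); rewrite /= eqxx => <-.
rewrite /dotp big1 // => j _; rewrite /blk /scl !fsubE.
have := HD (Tagged (fun i => 'I_(ns i)) j); rewrite /= (introF eqP ne).
have -> : xn (Tagged (fun i => 'I_(ns i)) j) = xk (Tagged (fun i => 'I_(ns i)) j).
  exact: (congr1 (fun f => f j) h).
by move->; rewrite subr0 subrr mul0r.
Qed.
End B.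
Arguments prod_step [R N ns Xb xk xn G gm i0].
Arguments blk_VI [R N ns Xb xk xn z Gs Dv gm c i0].

Lemma pt6 (R : realType) (a1 a2 a3 b1 b2 b3 c1 c2 c3 d1 d2 d3 r : R) :
  (a1 + a2 + a3 + r * (b1 + b2 + b3) - (c1 + c2 + c3 + r * (d1 + d2 + d3))) ^+ 2
  <= 12 * (a1 ^+ 2 + a2 ^+ 2 + a3 ^+ 2) + 12 * r ^+ 2 * (b1 ^+ 2 + b2 ^+ 2 + b3 ^+ 2)
   + 12 * (c1 ^+ 2 + c2 ^+ 2 + c3 ^+ 2) + 12 * r ^+ 2 * (d1 ^+ 2 + d2 ^+ 2 + d3 ^+ 2).
Proof.
have L3 : forall p q s : R, (p + q + s) ^+ 2 <= 3 * (p ^+ 2 + q ^+ 2 + s ^+ 2).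
  move=> p q s; have := sqr_ge0 (p - q); have := sqr_ge0 (q - s); have := sqr_ge0 (p - s); nra.
have L2 : forall p q : R, (p + q) ^+ 2 <= 2 * (p ^+ 2 + q ^+ 2).
  move=> p q; have := sqr_ge0 (p - q); nra.
have L2' : forall p q : R, (p - q) ^+ 2 <= 2 * (p ^+ 2 + q ^+ 2).
  move=> p q; have := sqr_ge0 (p + q); nra.
have h1 := L2' (a1 + a2 + a3 + r * (b1 + b2 + b3)) (c1 + c2 + c3 + r * (d1 + d2 + d3)).
have h2 := L2 (a1 + a2 + a3) (r * (b1 + b2 + b3)).
have h3 := L2 (c1 + c2 + c3) (r * (d1 + d2 + d3)).
have h4 := L3 a1 a2 a3. have h5 := L3 b1 b2 b3.
have h6 := L3 c1 c2 c3. have h7 := L3 d1 d2 d3.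
have r2 : 0 <= r ^+ 2 by rewrite sqr_ge0.
have h5' := ler_wpM2l r2 h5. have h7' := ler_wpM2l r2 h7.
rewrite !exprMn in h2 h3.
lra.
Qed.

Lemma pt4 (R : realType) (a b c d r : R) :
  (a + b + r * c + r * d) ^+ 2 <= 4 * (a ^+ 2 + b ^+ 2) + 4 * r ^+ 2 * (c ^+ 2 + d ^+ 2).
Proof.
have r2 : 0 <= r ^+ 2 by rewrite sqr_ge0.
have := sqr_ge0 (a - b); have := sqr_ge0 (c - d); have := sqr_ge0 (a + b - r * (c + d)).
move=> h1 h2 h3; have h2' := mulr_ge0 r2 h2.
nra.
Qed.
Arguments pt6 {R}.
Arguments pt4 {R}.

Theorem lemma6
  (R : realType) (N : nat) (hN : (0 < N)%N)
  (ns : 'I_N -> nat) (hns : forall i, (0 < ns i)%N) (d : nat)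
  (Xb : forall i : 'I_N, set ('I_(ns i) -> R))
  (X := prodset Xb)
  (F : (bidx ns -> R) -> (bidx ns -> R)) (f : (bidx ns -> R) -> R)
  (DF Df : set (bidx ns -> R))
  (Fs : (bidx ns -> R) -> 'rV[R]_d -> (bidx ns -> R))
  (g : (bidx ns -> R) -> (bidx ns -> R))
  (gs : (bidx ns -> R) -> 'rV[R]_d -> (bidx ns -> R))
  (CF Cf r : R) (gam rho : nat -> R)
  (it ik : nat -> 'I_N) (xit xis : nat -> 'rV[R]_d)
  (x y u : nat -> bidx ns -> R)
  (* problem assumption *)
  (HFcont : continuous_on DF F) (HFmono : monotone_on DF F)
  (Hfcvx : convex_on Df f)
  (HXint : X `<=` interior_of (DF `&` Df))
  (HXne : exists z, X z) (HXcomp : compact_set X) (HXcvx : convex_set X)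
  (HXb : forall i, closed_set (Xb i) /\ convex_set (Xb i))
  (HCF : 0 < CF) (HCf : 0 < Cf)
  (HFbd : forall z, X z -> nrm (F z) <= CF)
  (Hfbd : forall z, X z -> forall s, subgrad Df f z s -> nrm s <= Cf)
  (* \tilde\nabla f(z) is a subgradient of f at z *)
  (Hg : forall z, X z -> subgrad Df f z (g z))
  (* algorithm parameters *)
  (Hgam : forall k, 0 < gam k) (Hrho : forall k, 0 < rho k) (Hr : r < 1)
  (Hx0 : X (x 0%N)) (Hy0 : X (y 0%N))
  (Hy : forall k i,
     if i == it k then
       is_proj (Xb i)
         (blk i (x k - scl (gam k) (gs (x k) (xit k) + scl (rho k) (Fs (x k) (xit k)))))
         (blk i (y k.+1))
     else blk i (y k.+1) = blk i (x k))
  (Hx : forall k i,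
     if i == ik k then
       is_proj (Xb i)
         (blk i (x k - scl (gam k) (gs (y k.+1) (xis k) + scl (rho k) (Fs (y k.+1) (xis k)))))
         (blk i (x k.+1))
     else blk i (x k.+1) = blk i (x k))
  (* errors *)
  (wFt := fun k => Fs (x k) (xit k) - F (x k))
  (wft := fun k => gs (x k) (xit k) - g (x k))
  (wF := fun k => Fs (y k.+1) (xis k) - F (y k.+1))
  (wf := fun k => gs (y k.+1) (xis k) - g (y k.+1))
  (eFt := fun k => scl N%:R (blkmask (it k) (Fs (x k) (xit k))) - Fs (x k) (xit k))
  (eft := fun k => scl N%:R (blkmask (it k) (gs (x k) (xit k))) - gs (x k) (xit k))
  (eF := fun k => scl N%:R (blkmask (ik k) (Fs (y k.+1) (xis k))) - Fs (y k.+1) (xis k))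
  (ef := fun k => scl N%:R (blkmask (ik k) (gs (y k.+1) (xis k))) - gs (y k.+1) (xis k))
  (* auxiliary sequence *)
  (Hu0 : u 0%N = x 0%N)
  (Hu : forall k,
     is_proj X
       (u k + scl (N%:R^-1 * gam k)
                 (wf k + ef k + scl (rho k) (wF k) + scl (rho k) (eF k)))
       (u k.+1)) :
  forall (z : bidx ns -> R) (k : nat), X z ->
    (gam k * rho k) `^ r * dotp (F z) (y k.+1 - z)
      + (gam k * rho k) `^ r / rho k * (f (y k.+1) - f z)
    <= 2^-1 * N%:R * (gam k * rho k) `^ (r - 1)
         * (nsq (x k - z) - nsq (x k.+1 - z) + nsq (u k - z) - nsq (u k.+1 - z))
       + 2 / N%:R * (gam k * rho k) `^ (r + 1) / rho k ^+ 2
         * (6 * Cf ^+ 2 + 3 * nsq (wft k) + 3 * nsq (eft k)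
            + 4 * nsq (wf k) + 4 * nsq (ef k))
       + 2 / N%:R * (gam k * rho k) `^ (r + 1)
         * (6 * CF ^+ 2 + 3 * nsq (wFt k) + 3 * nsq (eFt k)
            + 4 * nsq (wF k) + 4 * nsq (eF k))
       + gam k `^ r * rho k `^ (r - 1)
         * dotp (wf k + ef k + scl (rho k) (wF k) + scl (rho k) (eF k)) (u k - y k.+1).
Proof.
move=> z k Xz.
have N0 : (N%:R : R) != 0 by rewrite pnatr_eq0 -lt0n.
have Npos : (0 : R) < N%:R by rewrite ltr0n.
have cvx : forall i, convex_set (Xb i) by move=> i; case: (HXb i).
have Xint : forall w, X w -> DF w /\ Df w.
  move=> w /HXint [e [e0 He]]; apply: He.
  rewrite subrr /nrm /nsq /dotp big1 ?sqrtr0 // => t _.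
  by rewrite /= mulr0.
have Xx : forall j, X (x j).
  elim=> [|j IH]; first exact: Hx0.
  exact: (prod_step IH (Hx j)).
have Xy1 : X (y k.+1) := prod_step (Xx k) (Hy k).
have h4 := Hg _ Xy1 z (proj2 (Xint _ Xz)).
have h5 := HFmono _ _ (proj1 (Xint _ Xy1)) (proj1 (Xint _ Xz)).
have h6a := nsq_le_sq (ltW HCf) (Hfbd _ Xy1 _ (Hg _ Xy1)).
have h6b := nsq_le_sq (ltW HCf) (Hfbd _ (Xx k) _ (Hg _ (Xx k))).
have h6c := nsq_le_sq (ltW HCF) (HFbd _ Xy1).
have h6d := nsq_le_sq (ltW HCF) (HFbd _ (Xx k)).
have gm0 := Hgam k; have rh0 := Hrho k.
set gm := gam k in gm0 *; set rh := rho k in rh0 *.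
set xk := x k in h6b h6d *; set x1 := x k.+1; set y1 := y k.+1 in h4 h5 h6a h6c *.
set uk := u k; set u1 := u k.+1.
set c := N%:R^-1 * gm.
have c0 : 0 < c by rewrite /c mulr_gt0 // invr_gt0.
set v := wf k + ef k + scl rh (wF k) + scl rh (eF k).
pose D := g y1 + scl rh (F y1) + v.
pose Dt := g xk + scl rh (F xk) + (wft k + eft k + scl rh (wFt k) + scl rh (eFt k)).
have h1 : dotp (xk - scl c D - x1) (z - x1) <= 0.
  apply: (blk_VI cvx (Hx k) _ Xz) => t.
  rewrite /D /v /wf /ef /wF /eF /blkmask /scl !faddE !foppE -/y1.
  case: (tag t == ik k); rewrite /c -/gm -/rh; field; apply/negP => /eqP H0; move: Npos; by rewrite H0 ltxx.
have h2 : dotp (xk - scl c Dt - y1) (x1 - y1) <= 0.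
  apply: (blk_VI cvx (Hy k) _ (Xx k.+1)) => t.
  rewrite /Dt /wft /eft /wFt /eFt /blkmask /scl !faddE !foppE -/xk.
  case: (tag t == it k); rewrite /c -/gm -/rh; field; apply/negP => /eqP H0; move: Npos; by rewrite H0 ltxx.
have h3 : dotp (uk + scl c v - u1) (z - u1) <= 0 := proj_VI HXcvx (Hu k) Xz.
have K : nsq (x1 - z) <= nsq (xk - z) - 2 * c * dotp D (y1 - z) + c ^+ 2 * nsq (Dt - D).
  have : 0 <= nsq (xk - z) - 2 * c * dotp D (y1 - z) + c ^+ 2 * nsq (Dt - D)
      - nsq (x1 - z) + 2 * dotp (xk - scl c D - x1) (z - x1)
      + 2 * dotp (xk - scl c Dt - y1) (x1 - y1).
    rewrite /nsq /dotp !mulr_sumr -!sumrN -!big_split /=.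
    apply: sumr_ge0 => t _; rewrite !fsubE /scl.
    have := sqr_ge0 (xk t - y1 t); have := sqr_ge0 (c * Dt t - c * D t - x1 t + y1 t).
    move=> ? ?; lra.
  lra.
have U : nsq (u1 - z) <= nsq (uk - z) + 2 * c * dotp v (uk - z) + c ^+ 2 * nsq v.
  have : 0 <= nsq (uk - z) + 2 * c * dotp v (uk - z) + c ^+ 2 * nsq v
      - nsq (u1 - z) + 2 * dotp (uk + scl c v - u1) (z - u1).
    rewrite /nsq /dotp !mulr_sumr -!sumrN -!big_split /=.
    apply: sumr_ge0 => t _; rewrite !fsubE !faddE /scl.
    have := sqr_ge0 (uk t + c * v t - u1 t).
    move=> ?; lra.
  lra.
have S3 : nsq (Dt - D) <= 12 * (nsq (g xk) + nsq (wft k) + nsq (eft k))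
    + 12 * rh ^+ 2 * (nsq (F xk) + nsq (wFt k) + nsq (eFt k))
    + 12 * (nsq (g y1) + nsq (wf k) + nsq (ef k))
    + 12 * rh ^+ 2 * (nsq (F y1) + nsq (wF k) + nsq (eF k)).
  rewrite -subr_ge0 /nsq /dotp !mulrDr !mulr_sumr -!sumrN -!big_split /=.
  apply: sumr_ge0 => t _; rewrite /Dt /D /v !fsubE !faddE /scl.
  have := pt6 (g xk t) (wft k t) (eft k t) (F xk t) (wFt k t) (eFt k t)
    (g y1 t) (wf k t) (ef k t) (F y1 t) (wF k t) (eF k t) rh.
  move=> ?; lra.
have S4 : nsq v <= 4 * (nsq (wf k) + nsq (ef k)) + 4 * rh ^+ 2 * (nsq (wF k) + nsq (eF k)).
  rewrite -subr_ge0 /nsq /dotp !mulrDr !mulr_sumr -!sumrN -!big_split /=.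
  apply: sumr_ge0 => t _; rewrite /v !faddE /scl.
  have := pt4 (wf k t) (ef k t) (wF k t) (eF k t) rh.
  move=> ?; lra.
have S5 : dotp D (y1 - z) = dotp (g y1) (y1 - z) + rh * dotp (F y1 - F z) (y1 - z)
    + rh * dotp (F z) (y1 - z) + dotp v (uk - z) - dotp v (uk - y1).
  rewrite /dotp !mulr_sumr -!sumrN -!big_split; apply: eq_bigr => t _ /=.
  rewrite /D !fsubE !faddE /scl; ring.
have S6 : dotp (g y1) (z - y1) = - dotp (g y1) (y1 - z).
  rewrite /dotp -sumrN; apply: eq_bigr => t _; rewrite !fsubE; ring.
have Dy : rh * dotp (F z) (y1 - z) + (f y1 - f z) + dotp v (uk - z) - dotp v (uk - y1)
    <= dotp D (y1 - z).
  rewrite S5; have := mulr_ge0 (ltW rh0) h5; rewrite S6 in h4; lra.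
have C1 := ler_wpM2l (ltW (mulr_gt0 (ltr0n _ 2) c0)) Dy.
set Sf := 6 * Cf ^+ 2 + 3 * nsq (wft k) + 3 * nsq (eft k) + 4 * nsq (wf k) + 4 * nsq (ef k).
set SF := 6 * CF ^+ 2 + 3 * nsq (wFt k) + 3 * nsq (eFt k) + 4 * nsq (wF k) + 4 * nsq (eF k).
have r2 : 0 <= rh ^+ 2 by rewrite sqr_ge0.
have B : nsq (Dt - D) + nsq v <= 4 * Sf + 4 * rh ^+ 2 * SF.
  have := ler_wpM2l r2 h6c; have := ler_wpM2l r2 h6d.
  have := mulr_ge0 r2 (nsq_ge0 (wFt k)); have := mulr_ge0 r2 (nsq_ge0 (eFt k)).
  have := mulr_ge0 r2 (nsq_ge0 (wF k)); have := mulr_ge0 r2 (nsq_ge0 (eF k)).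
  have := mulr_ge0 r2 (sqr_ge0 CF).
  have := nsq_ge0 (wft k); have := nsq_ge0 (eft k); have := nsq_ge0 (wf k);
  have := nsq_ge0 (ef k); have := sqr_ge0 Cf.
  rewrite /Sf /SF; lra.
have B' := ler_wpM2l (sqr_ge0 c) B.
have I1 : 2 * c * (rh * dotp (F z) (y1 - z) + (f y1 - f z)) <=
   (nsq (xk - z) - nsq (x1 - z) + nsq (uk - z) - nsq (u1 - z))
   + c ^+ 2 * (4 * Sf + 4 * rh ^+ 2 * SF) + 2 * c * dotp v (uk - y1).
  lra.
have gr0 : 0 < gm * rh by rewrite mulr_gt0.
have E1 : (gm * rh) `^ (r - 1) = (gm * rh) `^ r / (gm * rh).
  rewrite powRB; last by apply/implyP => _; rewrite gt_eqF.
  by rewrite powRr1 // ltW.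
have E2 : (gm * rh) `^ (r + 1) = (gm * rh) `^ r * (gm * rh).
  rewrite powRD; last by apply/implyP => _; rewrite gt_eqF.
  by rewrite powRr1 // ltW.
have E3 : gm `^ r * rh `^ (r - 1) = (gm * rh) `^ r / rh.
  rewrite powRB; last by apply/implyP => _; rewrite gt_eqF.
  by rewrite powRr1 ?ltW // powRM ?ltW // mulrA.
rewrite E1 E2 E3.
have P0 : 0 < (gm * rh) `^ r := powR_gt0 _ gr0.
set P := (gm * rh) `^ r.
have t2 : (0:R) < 2 by lra.
have K0 : 0 <= P / (2 * c * rh).
  apply: ltW; rewrite divr_gt0 //; apply: mulr_gt0 => //; apply: mulr_gt0 => //; lra.
rewrite -subr_ge0 in I1.
have H := mulr_ge0 K0 I1.
rewrite -subr_ge0; apply: (le_trans H); rewrite le_eqVlt; apply/orP; left; apply/eqP.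
rewrite /c; field.
apply/and3P; split; first by rewrite gt_eqF.
  by apply/negP => /eqP H0; move: Npos; rewrite H0 ltxx.
by rewrite gt_eqF.
Qed.
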